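(* Let $R>0$, $h>0$ and $\lambda>0$, and let $G_1,G_2$ be independent exponential random variables with rate $\lambda$ (representing $g_1^2,g_2^2$). For $\Delta>0$ let $$\alpha_1(\Delta)=2^R-\frac{h^2}{1+\Delta}-1,\qquad \alpha_2(\Delta)=2^R\frac{1+\Delta}{\Delta}-1,$$ and $Q(\Delta)=\Pr\{G_2\ge[\alpha_1(\Delta)]^+,\ G_1+G_2\ge\alpha_2(\Delta)\}$, where $[x]^+=\max\{x,0\}$. Let $\Delta_t=\frac{h^2}{2^R-1}-1$. Then the cubic equation $$\frac{h^2}{\lambda}\Delta^3-2^R(2^R+h^2)\Delta^2-2^R(2^{R+1}+h^2)\Delta-2^{2R}=0$$ has exactly one positive root $\Delta^\dagger$, and $\Delta^*=\max\{\Delta^\dagger,\Delta_t\}$ maximizes $Q(\Delta)$ over $\Delta>0$.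
   Context: This is the full-duplex Gaussian single-relay channel ($Y_r=\mathsf hX+Z_r$, $Y=\mathsf g_1X_r+\mathsf g_2X+Z$, unit powers and noise) under Rayleigh fading with $|\mathsf g_1|^2,|\mathsf g_2|^2$ i.i.d. exponential with rate $\lambda$, where the relay knows only the realization of its incoming channel $h=|\mathsf h|$. With Gaussian quantization distortion $\Delta$, the quantize-map-and-forward rate is $\big[\min\{\log_2(1+\frac{h^2}{1+\Delta}+g_2^2),\ \log_2(1+g_1^2+g_2^2)-\log_2\frac{1+\Delta}{\Delta}\}\big]^+$, and $Q(\Delta)$ equals one minus the outage probability at rate $R$ conditioned on $h$; so $\Delta^*$ is the outage-optimal quantizer given receiver CSI. *)

(* Defs.v *)
From HB Require Import structures.
From mathcomp Require Import all_boot all_order all_algebra.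
From mathcomp Require Import all_classical all_reals all_analysis.
From mathcomp Require Import exponential_distribution.
Set Implicit Arguments. Unset Strict Implicit. Unset Printing Implicit Defensive.
Import Order.TTheory GRing.Theory Num.Theory.
Local Open Scope classical_set_scope.
Local Open Scope ring_scope.

Section qmf.
Context {R : realType}.

Definition alpha1 (Rt h D : R) : R := 2 `^ Rt - h ^+ 2 / (1 + D) - 1.
Definition alpha2 (Rt D : R) : R := 2 `^ Rt * ((1 + D) / D) - 1.

Definition posp (x : R) : R := Num.max x 0.

Definition Qfun (Rt h lam D : R) : \bar R :=
  ((exponential_prob lam \x exponential_prob lam)
     [set z : R * R | (posp (alpha1 Rt h D) <= z.2)%R /\ (alpha2 Rt D <= z.1 + z.2)%R])%E.

Definition Delta_t (Rt h : R) : R := h ^+ 2 / (2 `^ Rt - 1) - 1.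

Definition cubic (Rt h lam D : R) : R :=
  h ^+ 2 / lam * D ^+ 3
  - 2 `^ Rt * (2 `^ Rt + h ^+ 2) * D ^+ 2
  - 2 `^ Rt * (2 `^ (Rt + 1) + h ^+ 2) * D
  - 2 `^ (2 * Rt).

End qmf.

(* Main.v *)
Require Import Defs.
From HB Require Import structures.
From mathcomp Require Import all_boot all_order all_algebra.
From mathcomp Require Import all_classical all_reals all_analysis.
From mathcomp Require Import exponential_distribution measurable_realfun.
From mathcomp Require Import ring lra.
Import Order.TTheory GRing.Theory Num.Theory.
Set Implicit Arguments. Unset Strict Implicit. Unset Printing Implicit Defensive.
Local Open Scope classical_set_scope.
Local Open Scope ring_scope.
Import numFieldTopology.Exports.
Import HBNNSimple.
Section dens.
Local Open Scope ereal_scope.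
Context d (T : measurableType d) (R : realType).
Variables (nu mu : {measure set T -> \bar R}) (g : T -> R).
Hypotheses (g0 : forall x, (0 <= g x)%R) (mg : measurable_fun setT g)
  (nuE : forall A, measurable A -> nu A = \int[mu]_(x in A) (g x)%:E).

Lemma dens_cov (f : T -> \bar R) (E : set T) : (forall x, 0 <= f x) ->
    measurable E -> measurable_fun E f ->
  \int[mu]_(x in E) (f x * (g x)%:E) = \int[nu]_(x in E) f x.
Proof.
move=> f0 mE mf; set g' := EFin \o g.
have mg' : measurable_fun setT g' by exact/measurable_EFinP.
have g'0 x : 0 <= g' x by rewrite lee_fin.
pose h := nnsfun_approx mE mf.
have -> : \int[nu]_(x in E) f x =
    lim (\int[nu]_(x in E) (EFin \o h n) x @[n --> \oo]).
  have fE x : E x -> f x = lim ((EFin \o h n) x @[n --> \oo]).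
    by move=> Ex; apply/esym/cvg_lim => //; exact: cvg_nnsfun_approx.
  under eq_integral => x /[!inE] /fE -> //.
  apply: monotone_convergence => //.
  - move=> n; apply/measurable_EFinP.
    by apply: (measurable_funS measurableT) => //; exact/measurable_funP.
  - by move=> n x Ex //=; rewrite lee_fin.
  - by move=> x Ex a b ab; rewrite lee_fin; exact/lefP/nd_nnsfun_approx.
have -> : \int[mu]_(x in E) (f x * g' x) =
    lim (\int[mu]_(x in E) ((EFin \o h n) \* g') x @[n --> \oo]).
  have fg x : E x -> f x * g' x = lim (((EFin \o h n) \* g') x @[n --> \oo]).
    by move=> Ex; apply/esym/cvg_lim => //; apply: cvgeZr;
      [by []|exact: cvg_nnsfun_approx].
  under eq_integral => x /[!inE] /fg -> //.
  apply: monotone_convergence => [//| | |].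
  - move=> n; apply/emeasurable_funM; apply/measurable_funTS.
      exact/measurable_EFinP.
    exact: mg'.
  - by move=> n x Ex /=; rewrite mule_ge0 ?lee_fin.
  - by move=> x Ex a b ab/=; rewrite lee_wpmul2r ?lee_fin//; exact/lefP/nd_nnsfun_approx.
suff suf n : \int[mu]_(x in E) ((EFin \o h n) x * g' x) =
    \int[nu]_(x in E) (EFin \o h n) x.
  by under eq_fun do rewrite suf.
transitivity (\int[nu]_(x in E)
   (\sum_(y \in range (h n)) (y * \1_(h n @^-1` [set y]) x)%:E)); last first.
  by apply: eq_integral => t tE; rewrite /= fimfunE -fsumEFin.
have indich m r : measurable_fun E (fun x => (r * \1_(h m @^-1` [set r]) x)%:E).
  by apply: (measurable_comp measurableT) => //; exact: measurable_funM.
rewrite ge0_integral_fsum//; last by move=> m y Ey; exact: nnfun_muleindic_ge0.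
transitivity (\int[mu]_(x in E) (\sum_(y \in range (h n))
    (y * \1_(h n @^-1` [set y]) x)%:E * g' x)).
  under [RHS]eq_integral => x xE.
    rewrite -ge0_mule_fsuml => [|y]; last exact: nnfun_muleindic_ge0.
    rewrite fsumEFin // -(fimfunE _ x); over.
  by [].
rewrite ge0_integral_fsum//; last 2 first.
  - move=> y; apply: emeasurable_funM => //; apply: measurable_funTS.
    exact: mg'.
  - by move=> m y Ey; rewrite mule_ge0 ?nnfun_muleindic_ge0.
apply: eq_fsbigr => r rhn.
under [RHS]eq_integral do rewrite EFinM.
rewrite integralZl_indic_nnsfun => //.
under eq_integral do rewrite EFinM -muleA.
rewrite ge0_integralZl//.
- under eq_integral do rewrite muleC.
  rewrite (eq_integral (g' \_ (h n @^-1` [set r]))); last first.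
    by move=> x xE; rewrite epatch_indic.
  rewrite -integral_mkcondr integral_indic//= setIC -nuE//; exact: measurableI.
- apply: emeasurable_funM; first exact/measurable_EFinP.
  exact/measurable_funTS/mg'.
- by move=> t Et; rewrite mule_ge0 ?lee_fin.
- by move: rhn; rewrite inE => -[t _ <-]; rewrite lee_fin.
Qed.
End dens.

Section expo.
Context {R : realType}.
Local Open Scope ereal_scope.
Notation mu := (@lebesgue_measure R).
Variable lam : R.
Hypothesis lam0 : (0 < lam)%R.

Let cexpNM : continuous (fun z : R^o => expR (- lam * z)).
Proof.
move=> z; apply: continuous_comp; last exact: continuous_expR.
by apply: continuousM => //; apply: (@continuousN _ R^o); exact: cst_continuous.
Qed.

Lemma expo_tail (t : R) : (0 <= t)%R ->
  exponential_prob lam `[t, +oo[%classic = (expR (- lam * t))%:E.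
Proof.
move=> t0; rewrite /exponential_prob.
rewrite (@ge0_continuous_FTC2y _ _ (fun x => (- expR (- lam * x))%R) _ 0)//.
- by rewrite EFinN sub0e oppeK.
- by move=> x _; apply: exponential_pdf_ge0; exact: ltW.
- apply: (@continuous_subspaceW R^o _ _ [set` `[0, +oo[%R]).
    by move=> x /=; rewrite !in_itv/= !andbT => /(le_trans t0).
  exact: within_continuous_exponential_pdf.
- rewrite -oppr0; apply: cvgN.
  rewrite (_ : (fun x => expR (- lam * x))%R =
               ((fun z => expR (- z)) \o (fun z => lam * z))%R); last first.
    by apply: eq_fun => x; rewrite /= mulNr.
  apply: (@cvg_comp _ _ _ _ _ _ (pinfty_nbhs R)); last exact: cvgr_expR.
  exact: gt0_cvgMry.
- by apply: cvgN; apply/cvg_at_right_filter; exact: cexpNM.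
- move=> x; rewrite in_itv/= andbT => tx.
  apply: derive1_exponential_pdf; rewrite in_itv/= andbT.
  exact: le_lt_trans tx.
Qed.

Lemma in_itvset (i : interval R) (x : R) : (x \in [set` i]) = (x \in i).
Proof. by apply/idP/idP => [/set_mem //| H]; exact: mem_set. Qed.

Lemma xsec_eq (a b x : R) :
  xsection [set z : R * R | (a <= z.2)%R /\ (b <= z.1 + z.2)%R] x =
  `[(Num.max a (b - x))%R, +oo[%classic.
Proof.
apply/seteqP; split => y; rewrite /xsection /= inE /= in_itv /= andbT ge_max.
  by move=> [-> ]; rewrite lerBlDl => ->.
by move=> /andP[-> ]; rewrite lerBlDl.
Qed.

Definition Pexp := @exponential_distribution_exponential_prob__canonical__probability_measure_Probability R lam lam0.

Lemma prodE (a b : R) : (0 <= a)%R -> (a <= b)%R ->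
  ((exponential_prob lam \x exponential_prob lam)
     [set z : R * R | (a <= z.2)%R /\ (b <= z.1 + z.2)%R]) =
  (expR (- lam * b) * (1 + lam * (b - a)))%R%:E.
Proof.
move=> a0 ab.
rewrite /product_measure1.
transitivity (\int[Pexp]_x (expR (- lam * Num.max a (b - x))%R)%:E).
  apply: (@eq_integral _ _ _ Pexp) => x _; rewrite /= xsec_eq expo_tail//.
  by rewrite le_max a0.
rewrite -(@dens_cov _ _ _ Pexp mu (exponential_pdf lam)); last 6 first.
- by move=> x; apply: exponential_pdf_ge0; exact: ltW.
- exact: measurable_exponential_pdf.
- by [].
- by move=> x; rewrite lee_fin expR_ge0.
- by [].
- apply/measurable_EFinP; apply: measurableT_comp; first exact: measurable_expR.
  apply: measurable_funM => //; apply: measurable_maxr => //.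
  exact: measurable_funB.
have c0 : (0 <= b - a)%R by rewrite subr_ge0.
have kE x : (expR (- lam * Num.max a (b - x)))%:E * (exponential_pdf lam x)%:E =
   (lam * expR (- lam * b))%:E * (\1_(`[0, b - a[%classic) x)%:E +
   (expR (- lam * a))%:E * ((exponential_pdf lam x)%:E * (\1_(`[b - a, +oo[%classic) x)%:E).
  rewrite !indicE /= !in_itvset !in_itv /= andbT.
  case: (ltP x 0%R) => x0.
    by rewrite lt0_exponential_pdf // -!EFinM -EFinD /= !(mulr0, mul0r, addr0).
  rewrite exponential_pdfE // -!EFinM -EFinD /=; congr EFin.
  case: (ltP x (b - a)%R) => xc /=.
    have -> : Num.max a (b - x)%R = (b - x)%R by apply/max_idPr; lra.
    rewrite mulr1 mulr0 mulr0 addr0 mulrCA -expRD; congr (_ * expR _)%R; ring.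
  have -> : Num.max a (b - x)%R = a by apply/max_idPl; lra.
  by rewrite mulr0 add0r mulr1.
under eq_integral do rewrite kE.
have mA : measurable (`[0%R, (b - a)%R[%classic : set R) by [].
have mB : measurable (`[(b - a)%R, +oo[%classic : set R) by [].
rewrite ge0_integralD //; last 4 first.
- by move=> x _; rewrite mule_ge0 // lee_fin ?mulr_ge0 ?expR_ge0 ?ltW.
- by apply/measurable_EFinP; apply: measurable_funM => //; exact: measurable_indic.
- by move=> x _; rewrite !mule_ge0 // lee_fin ?expR_ge0 //; apply: exponential_pdf_ge0; exact: ltW.
- apply/measurable_EFinP; apply: measurable_funM => //.
  apply: measurable_funM; first exact: measurable_exponential_pdf.
  exact: measurable_indic.
rewrite ge0_integralZl //; last 2 first.
- exact/measurable_EFinP/measurable_indic.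
- by rewrite lee_fin mulr_ge0 ?expR_ge0 ?ltW.
rewrite ge0_integralZl //; last 2 first.
- apply: emeasurable_funM; apply/measurable_EFinP; first exact: measurable_exponential_pdf.
  exact: measurable_indic.
- by move=> x _; rewrite mule_ge0 // lee_fin //; apply: exponential_pdf_ge0; exact: ltW.
rewrite integral_indic // setIT.
set m := (X in (_ * X + _)%E).
have -> : m = (b - a)%:E.
  rewrite /m; apply: eq_trans (@lebesgue_measure_itv R `[0%R, (b - a)%R[) _.
  rewrite /= lte_fin; case: ltP => h0; first by rewrite sube0.
  by congr EFin; lra.
have -> : \int[mu]_x ((exponential_pdf lam x)%:E * (\1_(`[(b - a)%R, +oo[%classic) x)%:E) =
   exponential_prob lam `[(b - a)%R, +oo[%classic.
  rewrite /exponential_prob [RHS]integral_mkcond epatch_indic.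
  by apply: eq_integral => x _.
rewrite expo_tail // -!EFinM -EFinD; congr EFin.
rewrite -expRD (_ : (- lam * a + - lam * (b - a) = - lam * b)%R); last by ring.
ring.
Qed.
End expo.
Section realpart.
Context {R : realType}.

Lemma phi_decr (y y' : R) : 0 <= y' -> y' <= y ->
  expR (- y) * (1 + y) <= expR (- y') * (1 + y').
Proof.
move=> y'0 yy.
have h1 : 1 + y <= (1 + y') * expR (y - y').
  apply: (@le_trans _ _ ((1 + y') * (1 + (y - y')))); first nra.
  by apply: ler_wpM2l; [lra | exact: expR_ge1Dx].
rewrite (_ : expR (- y') = expR (- y) * expR (y - y')); last first.
  by rewrite -expRD; congr expR; ring.
by rewrite -mulrA; apply: ler_wpM2l; [exact: expR_ge0 | rewrite mulrC].

Qed.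

Definition gfun (L c H u : R) := 1 + L * c * u + L * H * (u / (1 + u)).

Lemma gfun_gt0 L c H u : 0 < L -> 0 < c -> 0 <= H -> 0 < u -> 0 < gfun L c H u.
Proof.
move=> L0 c0 H0 u0; rewrite /gfun.
have : 0 <= L * H * (u / (1 + u)).
  by apply: mulr_ge0; [apply: mulr_ge0; lra | apply: divr_ge0; lra].
have : 0 < L * c * u by apply: mulr_gt0 => //; exact: mulr_gt0.
lra.
Qed.

Lemma keyineq L c H u v : 0 < L -> 0 < c -> 0 <= H -> 0 < u -> 0 < v ->
  (L * c + L * H / (1 + v) ^+ 2 - L * c * gfun L c H v) * (u - v) <= 0 ->
  expR (- (L * c * u)) * gfun L c H u <= expR (- (L * c * v)) * gfun L c H v.
Proof.
move=> L0 c0 H0 u0 v0 hT.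
have conc : gfun L c H u <= gfun L c H v + (L * c + L * H / (1 + v) ^+ 2) * (u - v).
  rewrite -subr_ge0.
  have -> : gfun L c H v + (L * c + L * H / (1 + v) ^+ 2) * (u - v) - gfun L c H u
     = L * H * ((u - v) ^+ 2 / ((1 + u) * (1 + v) ^+ 2)).
    rewrite /gfun; field.
    by apply/andP; split; apply/negP => /eqP; lra.
  apply: mulr_ge0; first by apply: mulr_ge0; lra.
  apply: divr_ge0; first exact: sqr_ge0.
  by apply: mulr_ge0; [lra | exact: sqr_ge0].
set G := gfun L c H v in hT conc *.
set X := L * c + L * H / (1 + v) ^+ 2 in hT conc.
have G0 : 0 < G by exact: gfun_gt0.
have h2 : gfun L c H u <= G * (1 + L * c * (u - v)) by nra.
have h3 : G * (1 + L * c * (u - v)) <= G * expR (L * c * (u - v)).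
  by apply: ler_wpM2l; [lra | exact: expR_ge1Dx].
rewrite (_ : expR (- (L * c * v)) = expR (- (L * c * u)) * expR (L * c * (u - v))); last first.
  by rewrite -expRD; congr expR; ring.
rewrite -[X in _ <= X]mulrA; apply: ler_wpM2l; first exact: expR_ge0.
by rewrite mulrC; exact: le_trans h2 h3.
Qed.

Definition spol (k3 k2 k1 k0 w : R) := k3 - k2 * w - k1 * w ^+ 2 - k0 * w ^+ 3.

Lemma spol_decr k3 k2 k1 k0 w1 w2 : 0 < k2 -> 0 <= k1 -> 0 <= k0 ->
  0 <= w1 -> w1 < w2 -> spol k3 k2 k1 k0 w2 < spol k3 k2 k1 k0 w1.
Proof.
move=> k20 k10 k00 w10 w12; rewrite /spol.
have d2 : 0 <= w2 ^+ 2 - w1 ^+ 2.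
  rewrite (_ : _ - _ = (w2 - w1) * (w2 + w1)); last by ring.
  by apply: mulr_ge0; lra.
have d3 : 0 <= w2 ^+ 3 - w1 ^+ 3.
  rewrite (_ : _ - _ = (w2 - w1) * (w2 ^+ 2 + w1 * w2 + w1 ^+ 2)); last by ring.
  apply: mulr_ge0; first lra.
  have : 0 <= w1 * w2 by apply: mulr_ge0; lra.
  have := sqr_ge0 w1; have := sqr_ge0 w2; lra.
have e1 : 0 < k2 * (w2 - w1) by apply: mulr_gt0; lra.
have e2 : 0 <= k1 * (w2 ^+ 2 - w1 ^+ 2) by exact: mulr_ge0.
have e3 : 0 <= k0 * (w2 ^+ 3 - w1 ^+ 3) by exact: mulr_ge0.
nra.
Qed.

Lemma spol_root k3 k2 k1 k0 : 0 < k3 -> 0 < k2 -> 0 <= k1 -> 0 <= k0 ->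
  exists2 w0, 0 < w0 & spol k3 k2 k1 k0 w0 = 0.
Proof.
move=> k30 k20 k10 k00.
pose P : {poly R} := k3%:P - k2 *: 'X - k1 *: 'X^2 - k0 *: 'X^3.
have PE w : P.[w] = spol k3 k2 k1 k0 w.
  by rewrite /P /spol !hornerE.
pose W := k3 / k2 + 1.
have W0 : 0 <= W by rewrite /W; have := divr_ge0 (ltW k30) (ltW k20); lra.
have sW : spol k3 k2 k1 k0 W < 0.
  have : spol k3 k2 k1 k0 W < spol k3 k2 k1 k0 (k3 / k2).
    apply: spol_decr => //; first exact: divr_ge0 (ltW k30) (ltW k20).
    rewrite /W; lra.
  suff : spol k3 k2 k1 k0 (k3 / k2) <= 0 by lra.
  rewrite /spol (_ : k2 * (k3 / k2) = k3); last by rewrite mulrC divfK // gt_eqF.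
  have := mulr_ge0 k10 (sqr_ge0 (k3 / k2)).
  have : 0 <= k0 * (k3 / k2) ^+ 3.
    apply: mulr_ge0 => //; apply: exprn_ge0; exact: divr_ge0 (ltW k30) (ltW k20).
  lra.
have cP : {within `[0, W], continuous (horner P)}.
  apply: continuous_subspaceT.
  move=> x; exact: continuous_horner.
have s0 : spol k3 k2 k1 k0 0 = k3 by rewrite /spol; ring.
have [|w0 w0in sw0] := @IVT R (horner P) 0 W 0 W0 cP.
  rewrite !PE s0; apply/andP; split.
    by rewrite ge_min; apply/orP; right; exact: ltW.
  by rewrite le_max; apply/orP; left; exact: ltW.
exists w0; last by rewrite -PE.
move: w0in; rewrite in_itv /= => /andP[w00 _].
rewrite lt_neqAle w00 andbT; apply/eqP => w0E.
by move: sw0; rewrite PE -w0E s0 => k; move: k30; rewrite k ltxx.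
Qed.
End realpart.
Section mainsec.
Context {R : realType} (Rt h lam : R).
Hypotheses (Rt0 : 0 < Rt) (h0 : 0 < h) (lam0 : 0 < lam).

Let c := 2 `^ Rt.
Let H := h ^+ 2.

Lemma c_gt1 : 1 < c.
Proof.
have c1 : 1 <= c.
  rewrite -(powRr0 2) /c; apply: ler_powR; [exact: ler1n | exact: ltW].
rewrite lt_neqAle c1 andbT eq_sym; apply/negP; rewrite /c powR_eq1.
rewrite (gt_eqF Rt0) orbF => /orP[/eqP|].
  by move=> e; lra.
by rewrite ltNge ler0n.
Qed.

Lemma H_gt0 : 0 < H.
Proof. by rewrite /H exprn_gt0. Qed.

Lemma cubicE E : cubic Rt h lam E =
  H / lam * E ^+ 3 - c * (c + H) * E ^+ 2 - c * (c * 2 + H) * E - c ^+ 2.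
Proof.
rewrite /cubic -/c -/H.
rewrite powRD; last by apply/implyP => _; rewrite pnatr_eq0.
rewrite powRr1 // -/c.
rewrite (mulrC 2 Rt) powRrM -/c powR_mulrn //; exact: powR_ge0.
Qed.


Let k3 := H / lam.
Let k2 := c * (c + H).
Let k1 := c * (c * 2 + H).
Let k0 := c ^+ 2.

Lemma c_gt0 : 0 < c. Proof. by have := c_gt1; lra. Qed.

Lemma k3_gt0 : 0 < k3. Proof. by rewrite /k3 divr_gt0 // H_gt0. Qed.
Lemma k2_gt0 : 0 < k2.
Proof. by rewrite /k2 mulr_gt0 ?c_gt0 //; have := c_gt0; have := H_gt0; lra. Qed.
Lemma k1_ge0 : 0 <= k1.
Proof. by rewrite /k1 mulr_ge0 //; have := c_gt0; have := H_gt0; lra. Qed.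
Lemma k0_ge0 : 0 <= k0.
Proof. by rewrite /k0 sqr_ge0. Qed.

Lemma cubic_spol E : 0 < E -> cubic Rt h lam E = E ^+ 3 * spol k3 k2 k1 k0 E^-1.
Proof.
move=> E0; rewrite cubicE /spol /k3 /k2 /k1 /k0; field.
by rewrite !gt_eqF.
Qed.

Lemma a1iff D : 0 < D -> (0 <= alpha1 Rt h D) = (Delta_t Rt h <= D).
Proof.
move=> D0; rewrite /alpha1 /Delta_t -/c -/H.
have -> : c - H / (1 + D) - 1 = (c - 1) - H / (1 + D) by ring.
rewrite subr_ge0 ler_pdivrMr; last lra.
rewrite lerBlDr ler_pdivrMr; last by have := c_gt1; lra.
by rewrite mulrC addrC.
Qed.

Lemma alpha1_Dt : alpha1 Rt h (Delta_t Rt h) = 0.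
Proof.
rewrite /alpha1 /Delta_t -/c -/H.
have := c_gt1; have := H_gt0 => Hp cp.
rewrite (_ : 1 + (H / (c - 1) - 1) = H / (c - 1)); last by ring.
field.
by apply/andP; split; apply/negP => /eqP; lra.
Qed.

Definition qr D := expR (- lam * alpha2 Rt D) *
  (1 + lam * (alpha2 Rt D - posp (alpha1 Rt h D))).

Lemma alpha2E D : 0 < D -> alpha2 Rt D = c - 1 + c * D^-1.
Proof. by move=> D0; rewrite /alpha2 -/c; field; rewrite gt_eqF. Qed.

Lemma Qform D : 0 < D -> Qfun Rt h lam D = (qr D)%:E.
Proof.
move=> D0; rewrite /Qfun prodE //.
  by rewrite /posp le_max lexx orbT.
have a2 : alpha2 Rt D = c - 1 + c * D^-1 by exact: alpha2E.
have cD : 0 <= c * D^-1 by rewrite mulr_ge0 // ?invr_ge0 ltW // c_gt0.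
have hD : 0 <= H / (1 + D) by rewrite divr_ge0 // ?ltW ?H_gt0 //; lra.
have := c_gt1 => c1.
rewrite /posp ge_max a2; apply/andP; split; last lra.
by rewrite /alpha1 -/c -/H; lra.
Qed.

Lemma qrA D : 0 < D -> 0 <= alpha1 Rt h D ->
  qr D = expR (- lam * (c - 1)) * (expR (- (lam * c * D^-1)) * gfun lam c H D^-1).
Proof.
move=> D0 aD.
rewrite /qr /posp (max_idPl aD).
have -> : alpha2 Rt D - alpha1 Rt h D = c * D^-1 + H * (D^-1 / (1 + D^-1)).
  rewrite /alpha2 /alpha1 -/c -/H; field.
  have : 0 < D^-1 by rewrite invr_gt0.
  by move=> _; rewrite gt_eqF //=; apply/negP => /eqP; lra.
rewrite (alpha2E D0) mulrA -expRD /gfun; congr (expR _ * _); ring.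
Qed.

Lemma claimA D E : 0 < D -> 0 < E -> 0 <= alpha1 Rt h D -> 0 <= alpha1 Rt h E ->
  cubic Rt h lam E * (E - D) <= 0 -> qr D <= qr E.
Proof.
move=> D0 E0 aD aE hc.
rewrite !qrA //; apply: ler_wpM2l; first exact: expR_ge0.
have Di : 0 < D^-1 by rewrite invr_gt0.
have Ei : 0 < E^-1 by rewrite invr_gt0.
apply: keyineq => //; [exact: c_gt0 | exact: ltW H_gt0 |].
have -> : (lam * c + lam * H / (1 + E^-1) ^+ 2 - lam * c * gfun lam c H E^-1) *
   (D^-1 - E^-1) = cubic Rt h lam E * (E - D) * (lam ^+ 2 / (E * (1 + E) ^+ 2 * D * E)).
  rewrite cubicE /gfun; field.
  by rewrite (gt_eqF E0) (gt_eqF D0) (gt_eqF lam0) /= andbT; apply/negP => /eqP; lra.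
apply: mulr_le0_ge0 => //; apply: divr_ge0; first exact: sqr_ge0.
apply: mulr_ge0; last exact: ltW.
by apply: mulr_ge0; [apply: mulr_ge0; [exact: ltW | exact: sqr_ge0] | exact: ltW].
Qed.


Lemma alpha2_le D E : 0 < D -> D <= E -> alpha2 Rt E <= alpha2 Rt D.
Proof.
move=> D0 DE; have E0 : 0 < E by exact: lt_le_trans DE.
rewrite (alpha2E D0) (alpha2E E0) lerD2l; apply: ler_wpM2l; first exact: ltW c_gt0.
by rewrite lef_pV2 // posrE.
Qed.

Lemma claimB D : 0 < D -> alpha1 Rt h D < 0 -> qr D <= qr (Delta_t Rt h).
Proof.
move=> D0 aD.
have DDt : D < Delta_t Rt h by rewrite ltNge -a1iff // -ltNge.
have Dt0 : 0 < Delta_t Rt h by exact: lt_trans DDt.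
rewrite /qr /posp (max_idPr (ltW aD)) alpha1_Dt maxxx !subr0 !mulNr.
have a2 : 0 <= alpha2 Rt (Delta_t Rt h).
  rewrite (alpha2E Dt0); have := c_gt1.
  have : 0 <= c * (Delta_t Rt h)^-1.
    by rewrite mulr_ge0 // ?invr_ge0 ltW // c_gt0.
  lra.
apply: phi_decr; first exact: mulr_ge0 (ltW lam0) a2.
by apply: ler_wpM2l; [exact: ltW | exact: alpha2_le (ltW DDt)].
Qed.

Lemma main_sec : exists Ddag : R,
    [/\ 0 < Ddag, cubic Rt h lam Ddag = 0,
        (forall D : R, 0 < D -> cubic Rt h lam D = 0 -> D = Ddag) &
        (forall D : R, 0 < D ->
           (Qfun Rt h lam D <= Qfun Rt h lam (Num.max Ddag (Delta_t Rt h)))%E)].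
Proof.
have [w0 w00 sw0] := spol_root k3_gt0 k2_gt0 k1_ge0 k0_ge0.
pose Dd := w0^-1.
have Dd0 : 0 < Dd by rewrite invr_gt0.
have cDd : cubic Rt h lam Dd = 0 by rewrite cubic_spol // invrK sw0 mulr0.
have uq : forall E, 0 < E -> cubic Rt h lam E = 0 -> E = Dd.
  move=> E E0; rewrite cubic_spol // => /eqP; rewrite mulf_eq0 expf_eq0 /= (gt_eqF E0) /=.
  move=> /eqP sE.
  have Ei : 0 < E^-1 by rewrite invr_gt0.
  case: (ltgtP E^-1 w0) => [lt|gt|eq].
  - have := spol_decr k3 k2_gt0 k1_ge0 k0_ge0 (ltW Ei) lt.
    by rewrite sw0 sE ltxx.
  - have := spol_decr k3 k2_gt0 k1_ge0 k0_ge0 (ltW w00) gt.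
    by rewrite sw0 sE ltxx.
  - by rewrite /Dd -eq invrK.
have pos : forall E, Dd < E -> 0 < cubic Rt h lam E.
  move=> E DdE; have E0 : 0 < E by exact: lt_trans DdE.
  have Ei : 0 < E^-1 by rewrite invr_gt0.
  rewrite cubic_spol //; apply: mulr_gt0; first exact: exprn_gt0.
  have lt : E^-1 < w0 by rewrite -[w0]invrK ltf_pV2 // posrE.
  have := spol_decr k3 k2_gt0 k1_ge0 k0_ge0 (ltW Ei) lt.
  by rewrite sw0.
exists Dd; split; [exact: Dd0 | exact: cDd | exact: uq | move=> D D0].
set Dt := Delta_t Rt h.
set Ds := Num.max Dd Dt.
have Ds0 : 0 < Ds by rewrite lt_max Dd0.
have aDs : 0 <= alpha1 Rt h Ds by rewrite a1iff // le_max lexx orbT.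
have A : forall D', 0 < D' -> 0 <= alpha1 Rt h D' -> qr D' <= qr Ds.
  move=> D' D'0 aD'; apply: claimA => //.
  case: (leP Dt Dd) => hd.
    by rewrite /Ds (max_idPl hd) cDd mul0r.
  rewrite /Ds (max_idPr (ltW hd)); apply: mulr_ge0_le0; first exact: ltW (pos _ hd).
  by rewrite subr_le0 -a1iff.
rewrite !Qform // lee_fin.
case: (leP 0 (alpha1 Rt h D)) => aD; first exact: A.
have DDt : D < Dt by rewrite ltNge -a1iff // -ltNge.
have Dt0 : 0 < Dt by exact: lt_trans DDt.
apply: le_trans (claimB D0 aD) (A Dt Dt0 _).
by rewrite alpha1_Dt.
Qed.

End mainsec.

Unset Implicit Arguments.

Theorem mainTheorem10 (R : realType) (Rt h lam : R) :
  0 < Rt -> 0 < h -> 0 < lam ->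
  exists Ddag : R,
    [/\ 0 < Ddag, cubic Rt h lam Ddag = 0,
        (forall D : R, 0 < D -> cubic Rt h lam D = 0 -> D = Ddag) &
        (forall D : R, 0 < D ->
           (Qfun Rt h lam D <= Qfun Rt h lam (Num.max Ddag (Delta_t Rt h)))%E)].
Proof.
move=> Rt0 h0 lam0; exact: (main_sec Rt0 h0 lam0).
Qed.
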